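(* For the cycle $C_n$ on $n\ge 3$ vertices: $IDI(C_n)=2$ if $n\ge 6$, and $IDI(C_3)=IDI(C_4)=IDI(C_5)=3$.
   Context: For a finite simple connected graph $G=(V,E)$ with diameter $d$, a rank assignment is a function $f:V\to\mathbb{R}$; under $f$, the string of a vertex $v$ is the $d$-vector whose $i$-th coordinate is the sum of $f(w)$ over all vertices $w$ with $d(v,w)=i$. The ID-index $IDI(G)$ is the minimum $k$ such that there exists $f:V\to\mathbb{R}$ with $|f(V)|=k$ under which all vertices have distinct strings. *)

(* Defs.v *)
From HB Require Import structures.
From mathcomp Require Import all_boot all_order all_algebra.
From mathcomp Require Import Rstruct.
Set Implicit Arguments. Unset Strict Implicit. Unset Printing Implicit Defensive.
Import Order.TTheory GRing.Theory Num.Theory.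

Section GraphDefs.
Variables (T : finType) (e : rel T).

Definition simple_graph : Prop := symmetric e /\ irreflexive e.

Fixpoint ball (k : nat) (v : T) : {set T} :=
  match k with
  | 0 => [set v]
  | k'.+1 => ball k' v :|: [set w | [exists u in ball k' v, e u w]]
  end.

Definition connected_graph : Prop := forall v w : T, w \in ball #|T| v.

(* graph distance: least k with w in ball k v (for connected graphs, < #|T|) *)
Definition dist (v w : T) : nat := find (fun k => w \in ball k v) (iota 0 #|T|).

Definition diameter : nat := \max_(v : T) \max_(w : T) dist v w.

Definition rstring (f : T -> Rdefinitions.R) (v : T) : seq Rdefinitions.R :=
  [seq (\sum_(w | dist v w == i) f w)%R | i <- iota 1 diameter].

Definition num_ranks (f : T -> Rdefinitions.R) : nat :=
  size (undup [seq f v | v <- enum T]).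

Definition distinguishing (f : T -> Rdefinitions.R) : Prop := injective (rstring f).

Definition is_IDI (k : nat) : Prop :=
  (exists f, distinguishing f /\ num_ranks f = k) /\
  (forall f, distinguishing f -> k <= num_ranks f).

End GraphDefs.

Definition cycle_rel (n : nat) : rel 'I_n :=
  fun i j => (val j == (val i).+1 %% n) || (val i == (val j).+1 %% n).
Arguments cycle_rel n : clear implicits.

(* Main.v *)
Require Import Defs.
From mathcomp Require Import all_boot all_order all_algebra.
From mathcomp Require Import Rstruct.
From mathcomp Require Import zify.
Set Implicit Arguments. Unset Strict Implicit. Unset Printing Implicit Defensive.

Definition cd n v w := minn (v-w + (w-v)) (n - (v-w + (w-v))).

Lemma modS_small n x : x < n -> x.+1 %% n = if x.+1 == n then 0 else x.+1.
Proof.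
move=> xn; case: eqP => [->|ne]; first by rewrite modnn.
by rewrite modn_small //; lia.
Qed.

Lemma adjP n (u w : 'I_n) : cycle_rel n u w ->
  ((w : nat) = ((u : nat)).+1 \/ (((u : nat)).+1 = n /\ (w : nat) = 0)) \/
  ((u : nat) = ((w : nat)).+1 \/ (((w : nat)).+1 = n /\ (u : nat) = 0)).
Proof.
rewrite /cycle_rel !modS_small ?ltn_ord //.
case/orP => /eqP; case: eqP => ? ?; [left; right | left; left | right; right | right; left]; by [].
Qed.

Lemma c1 n v w : 3 <= n -> v < n -> 0 < w -> w.+1 < n -> 0 < cd n v w ->
  (cd n v w.+1).+1 = cd n v w \/ (cd n v (w - 1)).+1 = cd n v w.
Proof. rewrite /cd; lia. Qed.
Lemma c2 n v : 3 <= n -> v < n -> 0 < cd n v 0 ->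
  (cd n v 1).+1 = cd n v 0 \/ (cd n v (n - 1)).+1 = cd n v 0.
Proof. rewrite /cd; lia. Qed.
Lemma c3 n v : 3 <= n -> v < n -> 0 < cd n v (n-1) ->
  (cd n v 0).+1 = cd n v (n-1) \/ (cd n v (n - 2)).+1 = cd n v (n-1).
Proof. rewrite /cd; lia. Qed.
Lemma adj_le n v u w : v < n -> u < n -> w < n ->
  (w = u.+1 \/ (u.+1 = n /\ w = 0)) \/ (u = w.+1 \/ (w.+1 = n /\ u = 0)) ->
  cd n v w <= (cd n v u).+1.
Proof. by move=> vn un wn [[->|[? ->]]|[->|[? ->]]]; rewrite /cd; lia. Qed.

Section Cyc.
Variable n : nat.
Hypothesis n3 : 3 <= n.
Let n0 : 0 < n. Proof. by lia. Qed.

Definition nxt (w : 'I_n) : 'I_n := Ordinal (ltn_pmod ((w : nat)).+1 n0).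
Definition prv (w : 'I_n) : 'I_n := Ordinal (ltn_pmod ((w : nat) + n.-1) n0).

Lemma succ_adj w : cycle_rel n (nxt w) w.
Proof. by rewrite /cycle_rel /= eqxx orbT. Qed.

Lemma pred_adj w : cycle_rel n (prv w) w.
Proof.
rewrite /cycle_rel /=; apply/orP; left.
rewrite -addn1 modnDml -addnA addn1 prednK // modnDr modn_small //.
Qed.

Lemma succ_val (w : 'I_n) : ((nxt w : nat) = ((w : nat)).+1 /\ ((w : nat)).+1 < n) \/ (((w : nat)).+1 = n /\ (nxt w : nat) = 0).
Proof.
rewrite /= modS_small //; case: eqP => ?; [right|left]; split => //.
have := ltn_ord w; lia.
Qed.

Lemma pred_val (w : 'I_n) : ((w : nat) = 0 /\ (prv w : nat) = n - 1) \/ (0 < (w : nat) /\ (prv w : nat) = (w : nat) - 1).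
Proof.
rewrite /=; case: (posnP ((w : nat))) => h.
  have e : ((w : nat) + n.-1) %% n = n - 1 by rewrite h add0n modn_small ?ltn_predL // subn1.
  by left; split.
right; split => //.
have -> : (w : nat) + n.-1 = ((w : nat) - 1) + n by rewrite -subn1; lia.
by rewrite modnDr modn_small //; have := ltn_ord w; lia.
Qed.

Lemma closer (v w : 'I_n) : 0 < cd n v w -> exists u, cycle_rel n u w /\ (cd n v u).+1 = cd n v w.
Proof.
move=> h; have vn := ltn_ord v; have wn := ltn_ord w.
have [[e1 l1]|[e1 e2]] := succ_val w; have [[e3 e4]|[e3 e4]] := pred_val w.
- move: h; rewrite e3 => h.
  case: (c2 n3 vn h) => hh; [exists (nxt w); split; first exact: succ_adj
                            | exists (prv w); split; first exact: pred_adj].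
    by rewrite e1 e3.
  by rewrite e4.
- have w1 : (w : nat).+1 < n by [].
  case: (c1 n3 vn e3 w1 h) => hh; [exists (nxt w); split; first exact: succ_adj
                            | exists (prv w); split; first exact: pred_adj].
    by rewrite e1.
  by rewrite e4.
- exfalso; lia.
- have ew : (w : nat) = n - 1 by lia.
  move: h; rewrite ew => h.
  case: (c3 n3 vn h) => hh; [exists (nxt w); split; first exact: succ_adj
                            | exists (prv w); split; first exact: pred_adj].
    by rewrite e2.
  by rewrite e4 ew; have -> : n - 1 - 1 = n - 2 by lia.
Qed.

Lemma ballE k (v w : 'I_n) : (w \in ball (cycle_rel n) k v) = (cd n v w <= k).
Proof.
elim: k w => [|k IH] w /=.
  rewrite in_set1; apply/eqP/idP => [->|h]; first by rewrite /cd; lia.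
  by apply/ord_inj; have := ltn_ord v; have := ltn_ord w; rewrite /cd in h; lia.
rewrite in_setU in_set IH.
apply/idP/idP.
  case/orP => [h|/existsP [u /andP [hu e]]]; first by lia.
  rewrite IH in hu.
  have := adj_le (ltn_ord v) (ltn_ord u) (ltn_ord w) (adjP e); lia.
move=> h; case: (leqP (cd n v w) k) => [//|h'].
have [|u [eu hu]] := @closer v w; first by lia.
apply/orP; right; apply/existsP; exists u; rewrite eu andbT IH; lia.
Qed.

Lemma find_leq c m : c < m -> find (fun k => c <= k) (iota 0 m) = c.
Proof.
move=> cm; have -> : m = c + (m - c).-1.+1 by lia.
rewrite iotaD find_cat size_iota.
have -> : has (fun k => c <= k) (iota 0 c) = false.
  by apply/hasPn => x; rewrite mem_iota; lia.
by rewrite /= add0n leqnn addn0.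
Qed.

Lemma cd_lt v w : v < n -> w < n -> cd n v w < n.
Proof. rewrite /cd; lia. Qed.

Lemma distE (v w : 'I_n) : dist (cycle_rel n) v w = cd n v w.
Proof.
rewrite /dist card_ord (eq_find (fun k => ballE k v w)).
by apply: find_leq; apply: cd_lt.
Qed.

End Cyc.


Definition RC n v lo mid hi : Prop :=
  [/\ v = 0, lo = 0, mid = 1 & hi = 3] \/
  [/\ v = 1, lo = 0, mid = 1 & hi = 2] \/
  [/\ v = 2, lo = 1, mid = 1 & hi = 2] \/
  [/\ v = 3, lo = 0, mid = 2 & hi = 3] \/
  [/\ 4 <= v, v.*2 <= n, lo = v - 3, mid = v - 1 & hi = v] \/
  [/\ 4 <= v, n.+2 = v.*2, lo = v - 3, mid = v - 2 & hi = v - 1] \/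
  [/\ 4 <= v, n.+1 = v.*2, lo = v - 3, mid = v - 1 & hi = v - 1] \/
  [/\ 4 <= v, v.*2 = n + 3, lo = n - v, mid = n - v & hi = n - v + 1] \/
  [/\ 4 <= v, v.*2 = n + 4, lo = n - v, mid = n - v + 1 & hi = n - v + 1] \/
  [/\ 4 <= v, v.*2 = n + 5, lo = n - v, mid = n - v + 1 & hi = n - v + 2] \/
  [/\ 4 <= v, n + 6 <= v.*2, lo = n - v, mid = n - v + 1 & hi = n - v + 3].

Lemma rc_inj n v w lo mid hi : 6 <= n -> v < n -> w < n -> RC n v lo mid hi -> RC n w lo mid hi -> v = w.
Proof.
move=> n6 vn wn Hv Hw.
destruct Hv as [Hv|[Hv|[Hv|[Hv|[Hv|[Hv|[Hv|[Hv|[Hv|[Hv|Hv]]]]]]]]]]; destruct Hw as [Hw|[Hw|[Hw|[Hw|[Hw|[Hw|[Hw|[Hw|[Hw|[Hw|Hw]]]]]]]]]];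
  case: Hv => *; case: Hw => *; lia.
Qed.

Lemma pXYZ (a b c : nat) : perm_eq [:: a; b; c] [:: a; b; c]. Proof. exact: perm_refl. Qed.
Lemma pYXZ (a b c : nat) : perm_eq [:: a; b; c] [:: b; a; c]. Proof. by apply/permP => p /=; lia. Qed.
Lemma pZYX (a b c : nat) : perm_eq [:: a; b; c] [:: c; b; a]. Proof. by apply/permP => p /=; lia. Qed.
Lemma pZXY (a b c : nat) : perm_eq [:: a; b; c] [:: c; a; b]. Proof. by apply/permP => p /=; lia. Qed.
Lemma pYZX (a b c : nat) : perm_eq [:: a; b; c] [:: b; c; a]. Proof. by apply/permP => p /=; lia. Qed.
Lemma pXZY (a b c : nat) : perm_eq [:: a; b; c] [:: a; c; b]. Proof. by apply/permP => p /=; lia. Qed.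

Lemma region2 n v : 6 <= n -> v < n ->
  exists lo mid hi, [/\ perm_eq [:: cd n v 0; cd n v 1; cd n v 3] [:: lo; mid; hi],
    lo <= mid, mid <= hi & RC n v lo mid hi].
Proof.
move=> n6 vn.
have [v0|v4] := ltnP v 4.
  case: v v0 vn => [|[|[|[|]]]] // _ _.
  - exists (cd n 0 0), (cd n 0 1), (cd n 0 3); split; first exact: pXYZ; rewrite /RC /cd; try lia.
    by left; split; lia.
  - exists (cd n 1 1), (cd n 1 0), (cd n 1 3); split; first exact: pYXZ; rewrite /RC /cd; try lia.
    by do 1 right; left; split; lia.
  - exists (cd n 2 1), (cd n 2 3), (cd n 2 0); split; first exact: pYZX; rewrite /RC /cd; try lia.
    by do 2 right; left; split; lia.
  - exists (cd n 3 3), (cd n 3 1), (cd n 3 0); split; first exact: pZYX; rewrite /RC /cd; try lia.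
    by do 3 right; left; split; lia.
have [h1|h1] := leqP v.*2 n.
  exists (cd n v 3), (cd n v 1), (cd n v 0); split; first exact: pZYX; rewrite /RC /cd; try lia.
  by do 4 right; left; split; lia.
have [h2|h2] := leqP v.*2 (n + 2).
  have [e|e] : n.+2 = v.*2 \/ n.+1 = v.*2 by lia.
    exists (cd n v 3), (cd n v 0), (cd n v 1); split; first exact: pZXY; rewrite /RC /cd; try lia.
    by do 5 right; left; split; lia.
  exists (cd n v 3), (cd n v 0), (cd n v 1); split; first exact: pZXY; rewrite /RC /cd; try lia.
  by do 6 right; left; split; lia.
have [h3|h3] := leqP (n + 6) v.*2.
  exists (cd n v 0), (cd n v 1), (cd n v 3); split; first exact: pXYZ; rewrite /RC /cd; try lia.
  by do 10 right; split; lia.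
have [e|[e|e]] : v.*2 = n + 3 \/ v.*2 = n + 4 \/ v.*2 = n + 5 by lia.
- exists (cd n v 0), (cd n v 3), (cd n v 1); split; first exact: pXZY; rewrite /RC /cd; try lia.
  by do 7 right; left; split; lia.
- exists (cd n v 0), (cd n v 1), (cd n v 3); split; first exact: pXYZ; rewrite /RC /cd; try lia.
  by do 8 right; left; split; lia.
- exists (cd n v 0), (cd n v 1), (cd n v 3); split; first exact: pXYZ; rewrite /RC /cd; try lia.
  by do 9 right; left; split; lia.
Qed.

Lemma s3a p1 p2 p3 q1 q2 q3 : p1 <= p2 -> p2 <= p3 -> q1 <= q2 -> q2 <= q3 ->
  (0 < p3 -> p3 = q1 \/ p3 = q2 \/ p3 = q3) -> (0 < q3 -> q3 = p1 \/ q3 = p2 \/ q3 = p3) ->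
  p3 = q3.
Proof. lia. Qed.

Lemma s3b p1 p2 p3 q1 q2 q3 : p1 <= p2 -> p2 <= p3 -> q1 <= q2 -> q2 <= q3 ->
  p3 = q3 -> p1 + p2 + p3 = q1 + q2 + q3 ->
  (0 < p1 -> p1 = q1 \/ p1 = q2 \/ p1 = q3) -> (0 < q1 -> q1 = p1 \/ q1 = p2 \/ q1 = p3) ->
  p1 = q1.
Proof. lia. Qed.

Import GRing.Theory Num.Theory.

Lemma memb (a0 a1 a3 b0 b1 b3 i : nat) :
  ((a0 == i) + (a1 == i) + (a3 == i) = (b0 == i) + (b1 == i) + (b3 == i))%N ->
  (i = a0 \/ i = a1 \/ i = a3) -> i = b0 \/ i = b1 \/ i = b3.
Proof.
move=> E H; move: E; case: H => [->|[->|->]]; rewrite eqxx;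
  do ![case: eqP => [?|?] /=]; try lia.
Qed.

Lemma wsum D a : a <= D -> (\sum_(i < D.+1) i * (a == i) = a)%N.
Proof.
move=> aD; have aD' : a < D.+1 by [].
rewrite (bigD1 (Ordinal aD')) //= eqxx muln1 big1 ?addn0 // => i ne.
case: eqP => [h|]; last by rewrite muln0.
by move/negP: ne; case; apply/eqP/ord_inj => /=; rewrite -h.
Qed.

Lemma map_eq_in (T U : eqType) (F G : T -> U) s x :
  map F s = map G s -> x \in s -> F x = G x.
Proof.
elim: s => //= y s IH [e1 e2]; rewrite in_cons => /orP [/eqP ->//|]; exact: IH.
Qed.

Section Six.
Variable n : nat.
Hypothesis n6 : 6 <= n.
Let n3 : 3 <= n. Proof. by lia. Qed.
Local Notation D := (diameter (cycle_rel n)).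

Lemma cd_le_diam (v w : 'I_n) : cd n v w <= D.
Proof.
rewrite -(distE n3) /diameter.
exact: (leq_trans (@leq_bigmax _ (fun w => dist (cycle_rel n) v w) w) (@leq_bigmax _ (fun v => \max_w dist (cycle_rel n) v w) v)).
Qed.

Lemma cd_le_diam' (v : 'I_n) s : s < n -> cd n v s <= D.
Proof. move=> hs; exact: (cd_le_diam v (Ordinal hs)). Qed.

Definition g6 (w : 'I_n) : nat := (((w : nat) == 0) + ((w : nat) == 1) + ((w : nat) == 3))%N.
Definition f6 (w : 'I_n) : Rdefinitions.R := ((g6 w)%:R)%R.

Lemma sum_eq1 (P : pred 'I_n) s (hs : s < n) :
  (\sum_(w | P w) ((w : nat) == s) = P (Ordinal hs))%N.
Proof.
rewrite big_mkcond (bigD1 (Ordinal hs)) //= eqxx big1 => [|u ne].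
  by case: (P _).
have : (u : nat) != s.
  by apply/negP => /eqP h; move/negP: ne; apply; apply/eqP/ord_inj.
by move/negbTE => ->; case: (P u).
Qed.

Definition cnt (v : nat) (i : nat) : nat :=
  ((cd n v 0 == i) + (cd n v 1 == i) + (cd n v 3 == i))%N.

Lemma string_nat (v : 'I_n) i :
  ((\sum_(w | dist (cycle_rel n) v w == i) f6 w)%R = ((cnt v i)%:R)%R).
Proof.
have h0 : 0 < n by lia. have h1 : 1 < n by lia. have h3 : 3 < n by lia.
rewrite /f6 -natr_sum; congr (_ %:R)%R.
rewrite /g6 !big_split /=.
rewrite (sum_eq1 (fun w => dist (cycle_rel n) v w == i) h0).
rewrite (sum_eq1 (fun w => dist (cycle_rel n) v w == i) h1).
rewrite (sum_eq1 (fun w => dist (cycle_rel n) v w == i) h3).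
by rewrite /cnt !(distE n3).
Qed.

Lemma cnt_perm (x : nat) lo mid hi i :
  perm_eq [:: cd n x 0; cd n x 1; cd n x 3] [:: lo; mid; hi] ->
  cnt x i = ((lo == i) + (mid == i) + (hi == i))%N.
Proof.
move=> /permP /(_ (pred1 i)) /=; rewrite /cnt !addn0 !addnA.
by [].
Qed.

Lemma inj6 : injective (rstring (cycle_rel n) f6).
Proof.
move=> v w E.
have C : forall i, 0 < i <= D -> cnt v i = cnt w i.
  move=> i hi.
  have := map_eq_in E (x := i); rewrite mem_iota.
  have -> : (1 <= i < 1 + D) by lia.
  move=> /(_ isT); rewrite !string_nat => /eqP; rewrite eqr_nat => /eqP.
  done.
have vn := ltn_ord v; have wn := ltn_ord w.
have [p1 [p2 [p3 [Pv l1 l2 Rv]]]] := @region2 n v n6 vn.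
have [q1 [q2 [q3 [Pw m1 m2 Rw]]]] := @region2 n w n6 wn.
have C' : forall i, 0 < i <= D ->
    ((p1 == i) + (p2 == i) + (p3 == i) = (q1 == i) + (q2 == i) + (q3 == i))%N.
  by move=> i hi; rewrite -(cnt_perm _ Pv) -(cnt_perm _ Pw) C.
have h0 : 0 < n by lia. have h1 : 1 < n by lia. have h3 : 3 < n by lia.
have B : forall (x : 'I_n) a b c, perm_eq [:: cd n x 0; cd n x 1; cd n x 3] [:: a; b; c] ->
    [/\ a <= D, b <= D & c <= D].
  move=> x a b c P.
  have bd : forall t, t \in [:: a; b; c] -> t <= D.
    move=> t; rewrite -(perm_mem P) !inE => /orP [/eqP ->|/orP [/eqP ->|/eqP ->]];
      exact: cd_le_diam'.
  by split; apply: bd; rewrite !inE eqxx ?orbT.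
have [pD1 pD2 pD3] := B v _ _ _ Pv.
have [qD1 qD2 qD3] := B w _ _ _ Pw.
have S : p1 + p2 + p3 = q1 + q2 + q3.
  have T : forall a b c, a <= D -> b <= D -> c <= D ->
      (\sum_(i < D.+1) i * ((a == i) + (b == i) + (c == i)))%N = a + b + c.
    move=> a b c ha hb hc.
    under eq_bigr do rewrite !mulnDr.
    by rewrite !big_split /= !wsum.
  rewrite -T // -[RHS]T //; apply: eq_bigr => i _.
  case: (posnP i) => [->|ip]; first by rewrite !mul0n.
  by rewrite C' // ip -ltnS ltn_ord.
have M : forall (a : nat) (x1 x2 x3 y1 y2 y3 : nat),
    a <= D -> ((x1 == a) + (x2 == a) + (x3 == a) = (y1 == a) + (y2 == a) + (y3 == a))%N ->
    a = x1 \/ a = x2 \/ a = x3 -> a = y1 \/ a = y2 \/ a = y3.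
  by move=> a x1 x2 x3 y1 y2 y3 _ e; apply: memb.
have e3 : p3 = q3.
  apply: (@s3a p1 p2 p3 q1 q2 q3 l1 l2 m1 m2).
    move=> p; apply: (M p3 p1 p2 p3) => //; last by right; right.
    by apply: C'; rewrite p pD3.
  move=> p; apply: (M q3 q1 q2 q3) => //; last by right; right.
  by symmetry; apply: C'; rewrite p qD3.
have e1 : p1 = q1.
  apply: (@s3b p1 p2 p3 q1 q2 q3 l1 l2 m1 m2 e3 S).
    move=> p; apply: (M p1 p1 p2 p3) => //; last by left.
    by apply: C'; rewrite p pD1.
  move=> p; apply: (M q1 q1 q2 q3) => //; last by left.
  by symmetry; apply: C'; rewrite p qD1.
have e2 : p2 = q2 by lia.
subst; apply: ord_inj; exact: (@rc_inj n v w _ _ _ n6 vn wn Rv Rw).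
Qed.

End Six.

Lemma natR_inj : injective (fun k : nat => (k%:R : Rdefinitions.R)%R).
Proof. by move=> a b /eqP; rewrite eqr_nat => /eqP. Qed.

Lemma num_ranks_nat n (g : 'I_n -> nat) :
  num_ranks (fun w => ((g w)%:R : Rdefinitions.R)%R) = size (undup (map g (enum 'I_n))).
Proof.
rewrite /num_ranks.
have -> : [seq ((g v)%:R : Rdefinitions.R)%R | v <- enum 'I_n] =
          [seq (k%:R : Rdefinitions.R)%R | k <- map g (enum 'I_n)] by rewrite -map_comp.
by rewrite undup_map_inj ?size_map //; exact: natR_inj.
Qed.

Lemma two_in_undup (T : eqType) (s : seq T) x y :
  x \in s -> y \in s -> x != y -> 2 <= size (undup s).
Proof.
move=> xs ys xy.
have := @uniq_leq_size _ [:: x; y] (undup s).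
rewrite /= inE andbT xy => /(_ isT); apply.
by move=> z; rewrite !inE mem_undup => /orP [] /eqP ->.
Qed.

Lemma three_in_undup (T : eqType) (s : seq T) x y z :
  x \in s -> y \in s -> z \in s -> x != y -> x != z -> y != z -> 3 <= size (undup s).
Proof.
move=> xs ys zs xy xz yz.
have := @uniq_leq_size _ [:: x; y; z] (undup s).
rewrite /= !inE negb_or xy xz yz /= => /(_ isT); apply.
by move=> t; rewrite !inE mem_undup => /orP [/eqP ->|/orP [] /eqP ->].
Qed.

Section Rot.
Variable n : nat.
Hypothesis n3 : 3 <= n.

Lemma cd_rot (v w : 'I_n) : cd n (nxt n3 v) (nxt n3 w) = cd n v w.
Proof.
have := ltn_ord v; have := ltn_ord w.
have [[-> ?]|[? ->]] := succ_val n3 v; have [[-> ?]|[? ->]] := succ_val n3 w; rewrite /cd; lia.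
Qed.

Lemma nxt_inj : injective (nxt n3).
Proof.
move=> v w e; apply: ord_inj; have := ltn_ord v; have := ltn_ord w.
have := succ_val n3 v; have := succ_val n3 w; rewrite e; lia.
Qed.

Lemma nxt_neq (v : 'I_n) : nxt n3 v != v.
Proof.
apply/eqP => e; have := succ_val n3 v; rewrite e; lia.
Qed.

Lemma lower2 (f : 'I_n -> Rdefinitions.R) : distinguishing (cycle_rel n) f -> 2 <= num_ranks f.
Proof.
move=> inj; rewrite /num_ranks.
have n0 : 0 < n by lia.
set o := Ordinal n0.
case: (boolP [forall u, f u == f o]) => [/forallP fc|].
  exfalso.
  have fc' : forall u, f u = f o by move=> u; apply/eqP.
  have E : rstring (cycle_rel n) f (nxt n3 o) = rstring (cycle_rel n) f o.
    rewrite /rstring; apply: eq_map => i.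
    rewrite (reindex_inj nxt_inj) /=.
    apply: eq_big => [u|u _]; last by rewrite !fc'.
    by rewrite !(distE n3) cd_rot.
  by have := nxt_neq o; rewrite (inj _ _ E) eqxx.
rewrite negb_forall => /existsP [u hu].
by apply: (two_in_undup (x := f u) (y := f o)); rewrite ?map_f ?mem_enum.
Qed.

End Rot.

Lemma ranks6 n (n6 : 6 <= n) : num_ranks (f6 (n := n)) = 2.
Proof.
rewrite /f6 num_ranks_nat.
have h0 : 0 < n by lia. have h2 : 2 < n by lia.
have le1 : forall v : 'I_n, g6 v <= 1.
  by move=> v; rewrite /g6; do ![case: eqP => ? /=]; lia.
have -> : size (undup [seq g6 v | v <- enum 'I_n]) = size [:: 0; 1].
  apply: perm_size; apply: uniq_perm; rewrite ?undup_uniq //.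
  move=> x; rewrite mem_undup !inE; apply/idP/idP.
    by case/mapP => v _ ->; have := le1 v; case: (g6 v) => [|[|]].
  case/orP => /eqP ->; apply/mapP.
    by exists (Ordinal h2); rewrite ?mem_enum.
  by exists (Ordinal h0); rewrite ?mem_enum.
by [].
Qed.

Lemma bridge n (P : pred nat) (G : nat -> nat) :
  (\sum_(w < n | P w) G w = sumn [seq G i | i <- iota 0 n & P i])%N.
Proof. by rewrite -big_mkord sumnE big_map big_filter /index_iota subn0. Qed.

Lemma diam_lt n (n3 : 3 <= n) : diameter (cycle_rel n) < n.
Proof.
have n0 : 0 < n by lia.
suff : diameter (cycle_rel n) <= n.-1 by lia.
apply/bigmax_leqP => v _; apply/bigmax_leqP => w _.
rewrite (distE n3); have := cd_lt n3 (ltn_ord v) (ltn_ord w); lia.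
Qed.

Lemma cd_le_D n (n3 : 3 <= n) (v w : 'I_n) : cd n v w <= diameter (cycle_rel n).
Proof.
rewrite -(distE n3) /diameter.
exact: (leq_trans (@leq_bigmax _ (fun w => dist (cycle_rel n) v w) w) (@leq_bigmax _ (fun v => \max_w dist (cycle_rel n) v w) v)).
Qed.

Lemma sum_dist n (n3 : 3 <= n) (v : 'I_n) i (G : nat -> nat) :
  (\sum_(u : 'I_n | dist (cycle_rel n) v u == i) G u = sumn [seq G k | k <- iota 0 n & cd n v k == i])%N.
Proof.
rewrite -(bridge n (fun k => cd n v k == i) G); apply: eq_bigl => u; by rewrite (distE n3).
Qed.

Definition gs n (k : nat) : nat := ((k == n - 2) + 2 * (k == n - 1))%N.
Definition fs n (w : 'I_n) : Rdefinitions.R := ((gs n w)%:R)%R.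
Definition SS n v i := sumn [seq gs n k | k <- iota 0 n & cd n v k == i].

Lemma small_inj n (n3 : 3 <= n) (I : seq nat) :
  (forall i, i \in I -> 0 < i <= diameter (cycle_rel n)) ->
  all (fun v => all (fun w => (v == w) || ~~ all (fun i => SS n v i == SS n w i) I)
    (iota 0 n)) (iota 0 n) ->
  injective (rstring (cycle_rel n) (@fs n)).
Proof.
move=> HI dec v w E.
have C : forall i, i \in I -> SS n v i = SS n w i.
  move=> i iI; have := map_eq_in E (x := i); rewrite mem_iota.
  have -> : (1 <= i < 1 + diameter (cycle_rel n)) by have := HI i iI; lia.
  move=> /(_ isT).
  rewrite /fs -!natr_sum => /eqP; rewrite eqr_nat => /eqP.
  by rewrite !(sum_dist n3).
apply: ord_inj.
have /allP/(_ v) := dec; rewrite mem_iota ltn_ord => /(_ isT).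
move/allP/(_ w); rewrite mem_iota ltn_ord => /(_ isT).
case/orP => [/eqP //|/negP []].
by apply/allP => i iI; rewrite C.
Qed.

Lemma ranks_small n : n \in [:: 3; 4; 5] -> num_ranks (@fs n) = 3.
Proof.
move=> hn; rewrite /fs num_ranks_nat.
have -> : [seq gs n (nat_of_ord w) | w <- enum 'I_n] = [seq gs n k | k <- iota 0 n].
  by rewrite -val_enum_ord -map_comp.
by move: hn; rewrite !inE => /orP [/eqP ->|/orP [] /eqP ->].
Qed.

Fixpoint allb k : seq (seq bool) :=
  if k is k'.+1 then map (cons true) (allb k') ++ map (cons false) (allb k') else [:: [::]].

Lemma allb_mem s : s \in allb (size s).
Proof.
elim: s => [|b s IH] //=.
by rewrite mem_cat; case: b; rewrite map_f ?orbT.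
Qed.

Definition N1 n S v i := sumn [seq 1 | k <- iota 0 n & (cd n v k == i) && nth false S k].
Definition N2 n S v i := sumn [seq 1 | k <- iota 0 n & (cd n v k == i) && ~~ nth false S k].

Definition dec_low n := all (fun S => has (fun v => has (fun w => (v != w) &&
   all (fun i => (N1 n S v i == N1 n S w i) && (N2 n S v i == N2 n S w i)) (iota 1 n))
   (iota 0 n)) (iota 0 n)) (allb n).

Lemma small_low n (n3 : 3 <= n) : dec_low n ->
  forall f, distinguishing (cycle_rel n) f -> 3 <= num_ranks f.
Proof.
move=> dec f inj; rewrite leqNgt; apply/negP => h.
have n0 : 0 < n by lia.
set a := f (Ordinal n0).
have [b fab] : exists b, forall u, f u = a \/ f u = b.
  case: (boolP [forall u, f u == a]) => [/forallP fc|].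
    by exists a => u; left; apply/eqP.
  rewrite negb_forall => /existsP [u0 hu0].
  exists (f u0) => u.
  case: (f u =P a) => [|ne1]; first by left.
  case: (f u =P f u0) => [|ne2]; first by right.
  exfalso; move: h; rewrite ltnNge => /negP; apply.
  apply: (three_in_undup (x := a) (y := f u0) (z := f u)); rewrite ?map_f ?mem_enum //.
  - by rewrite eq_sym.
  - by apply/eqP => e; apply: ne1.
  - by apply/eqP => e; apply: ne2.
set S := [seq f u != a | u <- enum 'I_n].
have sS : size S = n by rewrite size_map size_enum_ord.
have fS : forall u : 'I_n, f u = if nth false S u then b else a.
  move=> u; rewrite (nth_map u) ?size_enum_ord ?ltn_ord // nth_ord_enum.
  by case: eqP => [->|ne] //=; case: (fab u).
have SA : S \in allb n by have := allb_mem S; rewrite sS.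
have /allP/(_ S SA) := dec.
case/hasP => v; rewrite mem_iota => /= vn.
case/hasP => w; rewrite mem_iota => /= wn /andP [vw /allP Hi].
have key : forall (x : 'I_n) i, i < n ->
   (\sum_(u | dist (cycle_rel n) x u == i) f u = b *+ N1 n S x i + a *+ N2 n S x i)%R.
  move=> x i _.
  rewrite (eq_bigl (fun u : 'I_n => cd n x u == i)); last by move=> u; rewrite (distE n3).
  rewrite (eq_bigr (fun u : 'I_n => if nth false S u then b else a)); last by move=> u _; rewrite fS.
  rewrite (bigID (fun u : 'I_n => nth false S u)) /=.
  rewrite (eq_bigr (fun _ => b *+ 1)%R); last by move=> u /andP [_ ->].
  rewrite [X in (_ + X)%R](eq_bigr (fun _ => a *+ 1)%R); last by move=> u /andP [_ /negbTE ->].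
  rewrite !sumrMnr.
  rewrite (bridge n (fun k => (cd n x k == i) && nth false S k) (fun _ => 1%N)).
  by rewrite (bridge n (fun k => (cd n x k == i) && ~~ nth false S k) (fun _ => 1%N)).
have E : rstring (cycle_rel n) f (Ordinal vn) = rstring (cycle_rel n) f (Ordinal wn).
  apply/eq_in_map => i; rewrite mem_iota => hi.
  have iD := diam_lt n3.
  have iN : i < n by lia.
  rewrite !key //=.
  have iI : i \in iota 1 n by rewrite mem_iota; lia.
  by have /andP [/eqP -> /eqP ->] := Hi i iI.
by move: vw; have := inj _ _ E => -[->]; rewrite eqxx.
Qed.

Lemma dec3 : dec_low 3. Proof. by []. Qed.
Lemma dec4 : dec_low 4. Proof. by []. Qed.
Lemma dec5 : dec_low 5. Proof. by []. Qed.

Lemma small_case n (n3 : 3 <= n) (I : seq nat) :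
  n \in [:: 3; 4; 5] ->
  (forall i, i \in I -> exists v w : 'I_n, 0 < i <= cd n v w) ->
  all (fun v => all (fun w => (v == w) || ~~ all (fun i => SS n v i == SS n w i) I)
    (iota 0 n)) (iota 0 n) ->
  dec_low n ->
  is_IDI (cycle_rel n) 3.
Proof.
move=> hn HI dec dl; split.
  exists (@fs n); split; last exact: ranks_small.
  apply: (small_inj n3 (I := I)) => // i iI.
  have [v [w /andP [h1 h2]]] := HI i iI.
  by rewrite h1 (leq_trans h2) ?cd_le_D.
exact: small_low.
Qed.

Theorem mainTheorem9 (n : nat) : 3 <= n ->
  is_IDI (cycle_rel n) (if 6 <= n then 2 else 3).
Proof.
move=> n3; case: (leqP 6 n) => n6.
  split; first by exists (f6 (n := n)); split; [exact: inj6 | exact: ranks6].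
  by move=> f; exact: (@lower2 n n3 f).
case: n n3 n6 => [|[|[|[|[|[|n]]]]]] // n3 _.
- apply: (small_case n3 (I := [:: 1])) => //.
  move=> i; rewrite inE => /eqP ->.
  by exists (Ordinal (isT : 0 < 3)), (Ordinal (isT : 1 < 3)).
- apply: (small_case n3 (I := [:: 1; 2])) => //.
  move=> i; rewrite !inE => /orP [] /eqP ->;
  by exists (Ordinal (isT : 0 < 4)), (Ordinal (isT : 2 < 4)).
- apply: (small_case n3 (I := [:: 1; 2])) => //.
  move=> i; rewrite !inE => /orP [] /eqP ->;
  by exists (Ordinal (isT : 0 < 5)), (Ordinal (isT : 2 < 5)).
Qed.
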